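(* Let $P$ be a finite poset with height function $h$, let $\overline{P}$ be its dual poset, and let $H$ be an integer at least the maximal value of $h$ (so that $H-h$ is a height function on $\overline{P}$). Then for all $n\in\mathbb{Z}$, $$\mathsf{Z}_{\overline{P},H-h}([n]_q)=q^{(n-1)H}\,\sigma\big(\mathsf{Z}_{P,h}([n]_q)\big),$$ where $\sigma$ is the automorphism of $\mathbb{Q}(q)$ replacing $q$ by $1/q$ (applied to the element $\mathsf{Z}_{P,h}([n]_q)\in\mathbb{Q}(q)$).
   Context: $q$ is an indeterminate; $[n]_q=(q^n-1)/(q-1)$ for $n\in\mathbb{Z}$. A height function on a finite poset $R$ is $h:R\to\mathbb{N}$ with $h(x)<h(y)$ whenever $y$ covers $x$. The $q$-Zeta polynomial $\mathsf{Z}_{R,h}\in\mathbb{Q}(q)[x]$ is the unique polynomial with $\mathsf{Z}_{R,h}([n]_q)=\sum_{e_1\le\cdots\le e_{n-1}\text{ in }R}q^{h(e_1)+\cdots+h(e_{n-1})}$ for all $n\ge2$ (it exists, with degree $\max h$; explicitly $\sum_{k\ge1}\sum_{c_1<\cdots<c_k}q^{\sum h(c_i)}\mathsf{E}_{(h(c_1),\dots,h(c_k))}((x-[k+1]_q)/q^{k+1})$ where $\mathsf{E}_a([m]_q)=\sum_{m'\in\mathbb{N}^k,\sum m'_i=m}q^{\sum a_im'_i}$ for $m\ge0$). *)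

(* Defs.v *)
From HB Require Import structures.
From mathcomp Require Import all_boot all_order all_algebra.
From mathcomp Require Import fraction.
From Stdlib Require Import ClassicalEpsilon.
Set Implicit Arguments. Unset Strict Implicit. Unset Printing Implicit Defensive.
Import Order.TTheory GRing.Theory Num.Theory.
Local Open Scope ring_scope.

Definition Qq := {fraction {poly rat}}.
Definition qv : Qq := tofrac ('X : {poly rat}).
Definition qint (n : int) : Qq := (qv ^ n - 1) / (qv - 1).

Definition ev_inv (p : {poly rat}) : Qq :=
  (map_poly (fun c : rat => tofrac (c%:P : {poly rat})) p).[qv^-1].
Definition sigma (f : Qq) : Qq :=
  let r := repr f in ev_inv (\n_r) / ev_inv (\d_r).

Definition covers (d : Order.disp_t) (T : finPOrderType d) (x y : T) : Prop :=
  (x < y)%O /\ ~ (exists z : T, (x < z)%O /\ (z < y)%O).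

Definition is_height (d : Order.disp_t) (T : finPOrderType d) (h : T -> nat) : Prop :=
  forall x y : T, covers x y -> (h x < h y)%N.

(* sum over multichains e_1 <= ... <= e_{n-1} of q^(h e_1 + ... + h e_{n-1}) *)
Definition chain_sum (d : Order.disp_t) (T : finPOrderType d) (h : T -> nat)
  (n : nat) : Qq :=
  \sum_(t : (n.-1).-tuple T | sorted (fun x y => (x <= y)%O) t)
     qv ^+ (sumn (map h t)).

(* the q-Zeta polynomial : the unique polynomial Z with Z([n]_q) = chain_sum n
   for all n >= 2 (chosen by description; such Z exists and is unique) *)
Definition qZeta_spec (d : Order.disp_t) (T : finPOrderType d) (h : T -> nat)
  (Z : {poly Qq}) : Prop :=
  forall n : nat, (2 <= n)%N -> Z.[qint n] = chain_sum h n.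

Definition qZeta (d : Order.disp_t) (T : finPOrderType d) (h : T -> nat) : {poly Qq} :=
  match excluded_middle_informative (exists Z, qZeta_spec h Z) with
  | left H => proj1_sig (constructive_indefinite_description _ H)
  | right _ => 0
  end.

(* Main.v *)
Require Import Defs.
From HB Require Import structures.
From mathcomp Require Import all_boot all_order all_algebra.
From mathcomp Require Import fraction.
From mathcomp Require Import generic_quotient ring.
From Stdlib Require Import ClassicalEpsilon.
Import Order.TTheory GRing.Theory Num.Theory.
Local Open Scope ring_scope.

Lemma frac_repr (R : idomainType) (f : {fraction R}) :
  f * tofrac (\d_(repr f)) = tofrac (\n_(repr f)).
Proof.
rewrite -{1}[f]reprK.
set r := repr f.
unlock tofrac.
rewrite !piE.
apply/eqmodP => /=.
rewrite /FracField.equivf /= /FracField.mulf.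
have d0 := denom_ratioP r.
rewrite !numden_Ratio ?oner_neq0 ?mulf_neq0 ?oner_neq0 //.
by rewrite !mulr1 mulrC.
Qed.

Lemma qv_neq0 : qv != 0.
Proof. by rewrite /qv tofrac_eq0 polyX_eq0. Qed.

Lemma qvX_inj (a b : nat) : (qv ^+ a == qv ^+ b) = (a == b).
Proof.
rewrite /qv -!rmorphXn /= tofrac_eq.
apply/eqP/eqP => [E|->//].
by have := congr1 (fun p : {poly rat} => size p) E; rewrite !size_polyXn => -[].
Qed.

Lemma qv_neq1 : qv - 1 != 0.
Proof. by rewrite subr_eq0 -[qv]expr1 -(expr0 qv) qvX_inj. Qed.

Definition cf := ((@tofrac {poly rat}) \o (@polyC rat)).

Lemma ev_invE p : ev_inv p = (map_poly cf p).[qv^-1].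
Proof. by []. Qed.

Lemma ev_invD p1 p2 : ev_inv (p1 + p2) = ev_inv p1 + ev_inv p2.
Proof. by rewrite !ev_invE rmorphD hornerD. Qed.
Lemma ev_invM p1 p2 : ev_inv (p1 * p2) = ev_inv p1 * ev_inv p2.
Proof. by rewrite !ev_invE rmorphM hornerM. Qed.
Lemma ev_inv1 : ev_inv 1 = 1.
Proof. by rewrite !ev_invE rmorph1 hornerC. Qed.
Lemma ev_inv0 : ev_inv 0 = 0.
Proof. by rewrite !ev_invE rmorph0 hornerC. Qed.
Lemma ev_invX : ev_inv 'X = qv^-1.
Proof. by rewrite !ev_invE map_polyX hornerX. Qed.
Lemma ev_invXn n : ev_inv ('X^n) = qv^-1 ^+ n.
Proof. by rewrite !ev_invE map_polyXn hornerXn. Qed.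

Lemma ev_inv_neq0 p : p != 0 -> ev_inv p != 0.
Proof.
move=> p0.
have sp : size p = (size p).-1.+1 by rewrite prednK // size_poly_gt0.
set N := (size p).-1 in sp.
pose r : {poly rat} := \sum_(i < size p) (p`_i)%:P * 'X^(N - i).
have E : qv ^+ N * ev_inv p = tofrac r.
  rewrite ev_invE horner_coef size_map_poly mulr_sumr rmorph_sum /=.
  apply: eq_bigr => i _.
  rewrite coef_map /= rmorphM rmorphXn /= mulrCA; congr (_ * _).
  have iN : (i <= N)%N by rewrite -ltnS -sp.
  rewrite exprVn -{1}(subnK iN) exprD mulrK //.
  by rewrite unitfE expf_neq0 // qv_neq0.
have r0 : r`_0 = p`_N.
  rewrite /r coef_sum sp big_ord_recr /= subnn big1 ?add0r.
    by rewrite coefCM coefXn eqxx mulr1.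
  move=> i _; rewrite coefCM coefXn.
  have : (0 < N - i)%N by rewrite subn_gt0.
  by case: (N - i)%N => // k _; rewrite mulr0.
apply/negP => /eqP e0.
move: E; rewrite e0 mulr0 => /esym/eqP; rewrite tofrac_eq0 => /eqP r00.
move: r0; rewrite r00 coef0 => /esym/eqP.
by rewrite -lead_coefE lead_coef_eq0 (negbTE p0).
Qed.

Lemma div_helper (F : fieldType) (a b c e : F) : b != 0 -> e != 0 -> a * e = c * b -> c / e = a / b.
Proof.
move=> b0 e0 E.
by apply/eqP; rewrite eqr_div // -E mulrC.
Qed.

Lemma sigma_frac (n d : {poly rat}) : d != 0 ->
  sigma (tofrac n / tofrac d) = ev_inv n / ev_inv d.
Proof.
move=> d0.
rewrite /sigma.
set f := tofrac n / tofrac d.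
have := @frac_repr _ f.
set r := repr f.
have dr0 : \d_r != 0 := denom_ratioP r.
rewrite /f mulrAC => E.
have E2 : tofrac (n * \d_r) = tofrac (\n_r * d).
  by rewrite !tofracM -E divfK // tofrac_eq0.
move/eqP: E2; rewrite tofrac_eq => /eqP E3.
have := congr1 ev_inv E3; rewrite !ev_invM => E'.
have e1 := @ev_inv_neq0 _ d0; have e2 := @ev_inv_neq0 _ dr0.
exact: div_helper e1 e2 E'.
Qed.

Lemma frac_eq (f : Qq) : exists n d : {poly rat}, d != 0 /\ f = tofrac n / tofrac d.
Proof.
exists (\n_(repr f)), (\d_(repr f)); split; first exact: denom_ratioP.
by rewrite -frac_repr mulfK // tofrac_eq0 denom_ratioP.
Qed.

Lemma sigma_tofrac p : sigma (tofrac p) = ev_inv p.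
Proof.
by rewrite -[tofrac p]divr1 -tofrac1 sigma_frac ?oner_neq0 // ev_inv1 divr1.
Qed.

Lemma sigmaD (f g : Qq) : sigma (f + g) = sigma f + sigma g.
Proof.
have [n1 [d1 [d10 ->]]] := frac_eq f.
have [n2 [d2 [d20 ->]]] := frac_eq g.
have e1 := @ev_inv_neq0 _ d10; have e2 := @ev_inv_neq0 _ d20.
have t1 : tofrac d1 != 0 by rewrite tofrac_eq0.
have t2 : tofrac d2 != 0 by rewrite tofrac_eq0.
have -> : tofrac n1 / tofrac d1 + tofrac n2 / tofrac d2
        = tofrac (n1 * d2 + n2 * d1) / tofrac (d1 * d2).
  by rewrite (addf_div _ _ t1 t2) tofracD !tofracM.
rewrite !sigma_frac ?mulf_neq0 // ev_invD !ev_invM.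
by rewrite (addf_div _ _ e1 e2).
Qed.

Lemma sigmaM (f g : Qq) : sigma (f * g) = sigma f * sigma g.
Proof.
have [n1 [d1 [d10 ->]]] := frac_eq f.
have [n2 [d2 [d20 ->]]] := frac_eq g.
have -> : tofrac n1 / tofrac d1 * (tofrac n2 / tofrac d2)
        = tofrac (n1 * n2) / tofrac (d1 * d2).
  by rewrite mulf_div !tofracM.
by rewrite !sigma_frac ?mulf_neq0 // ev_invM ev_invM mulf_div.
Qed.

Lemma sigma1 : sigma 1 = 1.
Proof. by rewrite -tofrac1 sigma_tofrac ev_inv1. Qed.
Lemma sigma0 : sigma 0 = 0.
Proof. by rewrite -tofrac0 sigma_tofrac ev_inv0. Qed.

Lemma sigmaN (f : Qq) : sigma (- f) = - sigma f.
Proof.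
have : sigma (- f) + sigma f = 0 by rewrite -sigmaD addNr sigma0.
by move/eqP; rewrite addr_eq0 => /eqP.
Qed.

Lemma sigmaB (f g : Qq) : sigma (f - g) = sigma f - sigma g.
Proof. by rewrite sigmaD sigmaN. Qed.

Lemma sigmaV (f : Qq) : sigma (f^-1) = (sigma f)^-1.
Proof.
have [->|f0] := eqVneq f 0; first by rewrite invr0 sigma0 invr0.
have : sigma (f^-1) * sigma f = 1 by rewrite -sigmaM mulVf // sigma1.
move=> E; have sf : sigma f != 0.
  by apply/eqP => e; move: E; rewrite e mulr0 => /eqP; rewrite eq_sym oner_eq0.
by rewrite -[sigma f^-1](mulfK sf) E mul1r.
Qed.

Lemma sigmaXn (f : Qq) n : sigma (f ^+ n) = sigma f ^+ n.
Proof. by elim: n => [|n IH]; rewrite ?expr0 ?sigma1 // !exprS sigmaM IH. Qed.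

Lemma sigma_qv : sigma qv = qv^-1.
Proof. by rewrite /qv sigma_tofrac ev_invX. Qed.

Lemma sigma_qvz (n : int) : sigma (qv ^ n) = qv ^ (- n).
Proof.
case: n => k.
  by rewrite /exprz /= sigmaXn sigma_qv exprVn exprnN.
by rewrite NegzE opprK -exprnN sigmaV sigmaXn sigma_qv exprVn invrK.
Qed.

Lemma sigma_sum (I : Type) (s : seq I) (P : pred I) (F : I -> Qq) :
  sigma (\sum_(i <- s | P i) F i) = \sum_(i <- s | P i) sigma (F i).
Proof. exact: (big_morph sigma sigmaD sigma0). Qed.

Lemma sigma_horner (p : {poly Qq}) (x : Qq) :
  sigma p.[x] = \sum_(i < size p) sigma p`_i * sigma x ^+ i.
Proof.
rewrite horner_coef sigma_sum; apply: eq_bigr => i _.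
by rewrite sigmaM sigmaXn.
Qed.

Lemma qint_nat (n : nat) : qint n = (qv ^+ n - 1) / (qv - 1).
Proof. by []. Qed.

Lemma qint_inj (a b : nat) : qint a = qint b -> a = b.
Proof.
rewrite !qint_nat => E.
have := congr1 (fun x => x * (qv - 1) + 1) E.
rewrite !(divfK qv_neq1) !subrK => /eqP.
by rewrite qvX_inj => /eqP.
Qed.

Lemma poly_uniq (Z1 Z2 : {poly Qq}) :
  (forall n : nat, (2 <= n)%N -> Z1.[qint n] = Z2.[qint n]) -> Z1 = Z2.
Proof.
move=> E; apply/eqP; rewrite -subr_eq0; apply/negPn/negP => nz.
set p := Z1 - Z2 in nz.
pose rs := [seq qint (i.+2)%N | i <- iota 0 (size p)].
have := max_poly_roots nz.
move=> /(_ rs).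
have -> : all (root p) rs.
  apply/allP => x /mapP [i _ ->].
  by rewrite /root /p hornerD hornerN E // subrr.
have -> : uniq rs.
  rewrite map_inj_uniq ?iota_uniq //.
  by move=> i j /qint_inj [].
by rewrite size_map size_iota ltnn => /(_ isT isT).
Qed.

Lemma qZeta_eq (d : Order.disp_t) (T : finPOrderType d) (h : T -> nat) Z :
  qZeta_spec h Z -> qZeta h = Z.
Proof.
move=> HZ; rewrite /qZeta.
case: excluded_middle_informative => [ex|nex]; last by exfalso; apply: nex; exists Z.
case: constructive_indefinite_description => Z' HZ' /=.
apply: poly_uniq => n n2.
by rewrite HZ // HZ'.
Qed.

Set Implicit Arguments. Unset Strict Implicit. Unset Printing Implicit Defensive.

Section CS.
Variable T : finType.

Definition cs (r : rel T) (w : T -> nat) (m : nat) : Qq :=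
  \sum_(t : m.-tuple T | sorted r t) qv ^+ sumn (map w t).
Definition ds (r : rel T) (w : T -> nat) (x : T) (m : nat) : Qq :=
  \sum_(t : m.-tuple T | path r x t) qv ^+ sumn (map w t).

Lemma tuple_sum_cons (F : seq T -> Qq) m :
  \sum_(t : m.+1.-tuple T) F t = \sum_(x : T) \sum_(t : m.-tuple T) F (x :: t).
Proof.
rewrite pair_big /=.
rewrite (reindex (fun p : T * m.-tuple T => cons_tuple p.1 p.2)) /=; last first.
  exists (fun t : m.+1.-tuple T => (thead t, behead_tuple t)).
    by move=> [x t] _ /=; congr pair; apply: val_inj.
  by move=> t _; apply: val_inj => /=; rewrite [in RHS](tuple_eta t).
by apply: eq_bigr => -[x t].
Qed.

Lemma ds0 r w x : ds r w x 0 = 1.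
Proof.
rewrite /ds (big_pred1 [tuple]) //.
by move=> t; rewrite tuple0 /= eqxx.
Qed.

Lemma ds_cons r w x m :
  ds r w x m.+1 = \sum_(y | r x y) qv ^+ w y * ds r w y m.
Proof.
rewrite /ds big_mkcond (tuple_sum_cons (fun s => if path r x s then qv ^+ sumn (map w s) else 0)) [RHS]big_mkcond /=.
apply: eq_bigr => y _.
case: (r x y) => /=; last by rewrite big1.
rewrite mulr_sumr [RHS]big_mkcond; apply: eq_bigr => t _.
by case: (path r y t); rewrite ?mulr0 // exprD.
Qed.

Lemma cs_cons r w m :
  cs r w m.+1 = \sum_y qv ^+ w y * ds r w y m.
Proof.
rewrite /cs big_mkcond (tuple_sum_cons (fun s => if sorted r s then qv ^+ sumn (map w s) else 0)) /=.
apply: eq_bigr => y _.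
rewrite mulr_sumr /ds [RHS]big_mkcond; apply: eq_bigr => t _.
by case: (path r y t); rewrite ?mulr0 // exprD.
Qed.

Lemma cs_rev r w m : cs r w m = cs (fun x y => r y x) w m.
Proof.
rewrite /cs (@reindex_inj _ _ _ _ (fun t : m.-tuple T => rev_tuple t)) /=; last first.
  by move=> t1 t2 E; apply: val_inj; rewrite -[val t1]revK -[val t2]revK; have := congr1 val E => /= ->.
apply: eq_big => t /=; first by rewrite rev_sorted.
by rewrite map_rev sumn_rev.
Qed.
End CS.

Lemma dual_cs (d : Order.disp_t) (P : finPOrderType d) (w : P -> nat) (n : nat) :
  chain_sum (fun x : P^d => w x) n = cs (fun x y : P => (y <= x)%O) w n.-1.
Proof. reflexivity. Qed.

Lemma prim_cs (d : Order.disp_t) (P : finPOrderType d) (w : P -> nat) (n : nat) :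
  chain_sum w n = cs (fun x y : P => (x <= y)%O) w n.-1.
Proof. reflexivity. Qed.

Lemma height_mono (d : Order.disp_t) (P : finPOrderType d) (h : P -> nat) :
  is_height h -> forall x y : P, (x < y)%O -> (h x < h y)%N.
Proof.
move=> Hh.
suff S : forall k (x y : P), (#|[pred z | (x < z)%O && (z < y)%O]| <= k)%N ->
   (x < y)%O -> (h x < h y)%N.
  by move=> x y; apply: S (leqnn _).
elim=> [|k IH] x y.
  rewrite leqn0 => /eqP /card0_eq E xy; apply: Hh; split => // -[z [xz zy]].
  by have := E z; rewrite inE xz zy.
move=> cK xy.
case: (pickP [pred z | (x < z)%O && (z < y)%O]) => [z /andP [xz zy]|none].
  have c1 : (#|[pred w | (x < w)%O && (w < z)%O]| <= k)%N.
    rewrite -ltnS; apply: leq_trans cK; apply: proper_card; apply/properP; split.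
      by apply/subsetP => w; rewrite !inE => /andP [-> wz] /=; apply: lt_trans zy.
    by exists z; rewrite !inE ?xz ?zy ?ltxx ?andbF.
  have c2 : (#|[pred w | (z < w)%O && (w < y)%O]| <= k)%N.
    rewrite -ltnS; apply: leq_trans cK; apply: proper_card; apply/properP; split.
      by apply/subsetP => w; rewrite !inE => /andP [zw ->]; rewrite andbT; apply: lt_trans zw.
    by exists z; rewrite !inE ?xz ?zy ?ltxx.
  exact: ltn_trans (IH _ _ c1 xz) (IH _ _ c2 zy).
apply: Hh; split => // -[z [xz zy]].
by have := none z; rewrite /= xz zy.
Qed.


Lemma f3 (F : fieldType) (a Q c Y : F) : Q - c != 0 ->
  a / (Q - c) * (Q * Y) = c * (a / (Q - c) * Y) + a * Y.
Proof. move=> ne; field; exact: ne. Qed.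

Lemma rec_solve (k : nat) (R : {poly Qq}) (s : nat -> Qq) :
  (size R <= k)%N -> (forall m, s m.+1 = qv ^+ k * s m + R.[qv ^+ m]) ->
  exists F : {poly Qq}, (size F <= k.+1)%N /\ forall m, s m = F.[qv ^+ m].
Proof.
move=> sR rec.
pose G : {poly Qq} := \poly_(a < k) (R`_a / (qv ^+ a - qv ^+ k)).
have sG : (size G <= k)%N by exact: size_poly.
have GE : forall y, G.[qv * y] = qv ^+ k * G.[y] + R.[y].
  move=> y; rewrite !(horner_coef_wide _ sG) (horner_coef_wide _ sR) mulr_sumr -big_split /=.
  apply: eq_bigr => i _; rewrite coef_poly ltn_ord.
  have ne : qv ^+ i - qv ^+ k != 0 by rewrite subr_eq0 qvX_inj neq_ltn ltn_ord.
  by rewrite exprMn f3.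
pose u m := s m - G.[qv ^+ m].
have uE : forall m, u m = u 0 * (qv ^+ m) ^+ k.
  elim=> [|m IH]; first by rewrite expr0 expr1n mulr1.
  rewrite /u rec exprS GE.
  have -> : qv ^+ k * s m + R.[qv ^+ m] - (qv ^+ k * G.[qv ^+ m] + R.[qv ^+ m])
          = qv ^+ k * u m by rewrite /u; ring.
  by rewrite IH exprMn mulrCA.
exists (G + u 0 *: 'X^k); split.
  apply: leq_trans (size_add _ _) _; rewrite geq_max (leq_trans sG) //.
  by apply: leq_trans (size_scale_leq _ _) _; rewrite size_polyXn.
move=> m; rewrite hornerD hornerZ hornerXn -uE /u.
by rewrite addrC subrK.
Qed.

Section Exist.
Variables (d : Order.disp_t) (P : finPOrderType d) (h : P -> nat).
Hypothesis Hh : is_height h.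

Definition rge := fun x y : P => (y <= x)%O.

Lemma ds_ge_rec x m : ds rge h x m.+1 =
  qv ^+ h x * ds rge h x m + \sum_(y | (y < x)%O) qv ^+ h y * ds rge h y m.
Proof.
rewrite ds_cons (bigD1 x) /rge //=; congr (_ + _).
by apply: eq_bigl => y; rewrite lt_neqAle andbC.
Qed.

Lemma ds_poly x : exists F : {poly Qq},
  (size F <= (h x).+1)%N /\ forall m, ds rge h x m = F.[qv ^+ m].
Proof.
suff S : forall k x, (h x < k)%N -> exists F : {poly Qq},
  (size F <= (h x).+1)%N /\ forall m, ds rge h x m = F.[qv ^+ m].
  exact: S (ltnSn _).
elim=> [//|k IH] {}x hx.
have : forall y, exists F : {poly Qq}, (y < x)%O ->
    (size F <= (h y).+1)%N /\ forall m, ds rge h y m = F.[qv ^+ m].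
  move=> y; case yx: (y < x)%O; last by exists 0.
  have [F HF] := IH y (leq_trans (height_mono Hh yx) hx).
  by exists F.
case/fin_all_exists => Fs HFs.
pose R : {poly Qq} := \sum_(y | (y < x)%O) qv ^+ h y *: Fs y.
apply: (@rec_solve (h x) R).
  apply/leq_sizeP => j hj; rewrite /R coef_sum big1 // => y yx.
  have [sF _] := HFs y yx.
  rewrite coefZ (leq_sizeP _ _ sF) ?mulr0 //.
  exact: leq_trans (height_mono Hh yx) hj.
move=> m; rewrite ds_ge_rec /R horner_sum; congr (_ + _).
apply: eq_bigr => y yx; have [_ E] := HFs y yx.
by rewrite hornerZ E.
Qed.

End Exist.

Lemma f4 (F : fieldType) (q a p : F) : a != 0 -> q - 1 != 0 ->
  a^-1 * (q - 1) * ((p * a - 1) / (q - 1)) + a^-1 = p.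
Proof. move=> a0 q1; field; by rewrite a0 q1. Qed.

Lemma qZeta_exists (d : Order.disp_t) (P : finPOrderType d) (h : P -> nat) (H : nat) :
  is_height h -> (forall x, (h x <= H)%N) ->
  exists Z : {poly Qq}, qZeta_spec h Z /\ (size Z <= H.+1)%N.
Proof.
move=> Hh hH.
have [Fs HFs] := fin_all_exists (ds_poly Hh).
pose L : {poly Qq} := ((qv ^+ 2)^-1 * (qv - 1)) *: 'X + ((qv ^+ 2)^-1)%:P.
have LE : forall m, L.[qint m.+2] = qv ^+ m.
  move=> m; rewrite hornerD hornerZ hornerX hornerC qint_nat -[m.+2]addn2 exprD.
  have a0 : qv ^+ 2 != 0 by rewrite expf_neq0 // qv_neq0.
  exact: (f4 _ a0 qv_neq1).
have sL : (size L <= 2)%N.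
  apply/leq_sizeP => j hj; rewrite coefD coefZ coefX coefC.
  by case: j hj => [|[|j]] //= _; rewrite mulr0 addr0.
exists (\sum_x qv ^+ h x *: (Fs x \Po L)); split.
  move=> [|[|m]] // _.
  have E : cs (fun x y : P => (x <= y)%O) h m.+1 = cs (rge (P:=P)) h m.+1 := cs_rev _ _ _.
  rewrite prim_cs /= E cs_cons horner_sum; apply: eq_bigr => y _.
  have [_ Ey] := HFs y.
  by rewrite hornerZ horner_comp LE Ey.
apply/leq_sizeP => j hj; rewrite coef_sum big1 // => x _.
have [sF _] := HFs x.
have sC : (size (Fs x \Po L) <= H.+1)%N.
  apply: leq_trans (size_comp_poly_leq _ _) _.
  rewrite ltnS; apply: leq_trans (leq_mul (leqnn _) (_ : (size L).-1 <= 1)%N) _.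
    by rewrite -subn1 leq_subLR.
  rewrite muln1; apply: leq_trans (hH x).
  by rewrite -subn1 leq_subLR add1n.
by rewrite coefZ (leq_sizeP _ _ sC) ?mulr0.
Qed.

Lemma sumn_dual (P : Type) (w : P -> nat) (H : nat) (t : seq P) :
  (forall x, (w x <= H)%N) ->
  (sumn (map (fun x => H - w x) t) + sumn (map w t) = size t * H)%N.
Proof.
move=> wH; elim: t => [//|a t IH] /=.
by rewrite addnACA IH subnK // mulSn.
Qed.

Lemma dual_chain (d : Order.disp_t) (P : finPOrderType d) (h : P -> nat) (H n : nat) :
  (forall x, (h x <= H)%N) -> (1 <= n)%N ->
  chain_sum (fun x : P^d => (H - h x)%N) n
  = qv ^ ((n%:Z - 1) * H%:Z) * sigma (chain_sum h n).
Proof.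
move=> hH; case: n => [//|m] _.
rewrite dual_cs prim_cs /=.
have E : cs (fun x y : P => (y <= x)%O) (fun x => H - h x)%N m
       = cs (fun x y : P => (x <= y)%O) (fun x => H - h x)%N m := cs_rev _ _ _.
rewrite E /cs sigma_sum mulr_sumr; apply: eq_bigr => t _.
have S := sumn_dual t hH; rewrite size_tuple in S.
rewrite -[qv ^+ sumn (map h t)]/(qv ^ (Posz (sumn (map h t)))) sigma_qvz.
rewrite -expfzDr ?qv_neq0 //.
have -> : ((Posz m.+1 - 1) * Posz H - Posz (sumn (map h t)) = Posz (sumn (map (fun x => (H - h x)%N) t)))%R.
  by rewrite -[m.+1]addn1 PoszD addrK -PoszM -S PoszD addrK.
by [].
Qed.


Lemma f1 (F : fieldType) (q y : F) : q != 0 -> q - 1 != 0 -> y != 0 ->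
  (y^-1 - 1)/(q^-1 - 1) = q/(q-1) * ((y-1)/y).
Proof.
move=> q0 q1 y0.
have q2 : 1 + -1 * q != 0 by rewrite mulN1r -opprB oppr_eq0.
field; by rewrite y0 q1 q0 q2.
Qed.

Lemma f2 (F : fieldType) (c b a y : F) (k H : nat) : y != 0 -> (k <= H)%N ->
  c * b * a^+k * (y^+(H-k) * (y-1)^+k) = y^+H * b * (c * (a * ((y-1)/y))^+k).
Proof.
move=> y0 kH.
rewrite exprMn expr_div_n -{2}(subnK kH) exprD.
have yk : y ^+ k != 0 by rewrite expf_neq0.
field. all: try by [apply/eqP | exact: yk].
Qed.

Lemma sigma_qint (n : int) : sigma (qint n) = qv / (qv - 1) * ((qv ^ n - 1) / qv ^ n).
Proof.
rewrite /qint sigmaM sigmaV !sigmaB sigma1 sigma_qvz sigma_qv -invr_expz.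
have y0 : qv ^ n != 0 by rewrite expfz_neq0 // qv_neq0.
exact: (f1 qv_neq0 qv_neq1 y0).
Qed.

Lemma qvz_shift (n : int) (H : nat) :
  qv ^ ((n - 1) * H%:Z) = (qv ^ n) ^+ H * (qv ^+ H)^-1.
Proof.
rewrite -exprz_exp -[(qv ^ (n - 1)) ^ H%:Z]/((qv ^ (n - 1)) ^+ H).
rewrite expfzDr ?qv_neq0 // exprMn -[-1]/(- (1%:Z)) -invr_expz expr1z exprVn.
by [].
Qed.

Lemma h1 (F : fieldType) (a b : F) : b != 0 -> b * (a / b) = a.
Proof. by move=> b0; rewrite mulrC divfK. Qed.

Definition Wp (Z : {poly Qq}) (H : nat) : {poly Qq} :=
  \sum_(k < size Z) (sigma Z`_k * (qv ^+ H)^-1 * (qv / (qv - 1)) ^+ k) *: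
     ((1 + (qv - 1) *: 'X) ^+ (H - k) * ((qv - 1) *: 'X) ^+ k).

Lemma W_eval (Z : {poly Qq}) (H : nat) (n : int) : (size Z <= H.+1)%N ->
  (Wp Z H).[qint n] = qv ^ ((n - 1) * H%:Z) * sigma (Z.[qint n]).
Proof.
move=> sZ.
have y0 : qv ^ n != 0 by rewrite expfz_neq0 // qv_neq0.
have Xe : (qv - 1) * qint n = qv ^ n - 1 by exact: (h1 _ qv_neq1).
rewrite /Wp horner_sum sigma_horner mulr_sumr; apply: eq_bigr => k _.
rewrite hornerZ hornerM !horner_exp hornerD hornerC hornerZ hornerX Xe.
rewrite [1 + _]addrC subrK sigma_qint qvz_shift.
apply: f2 y0 _.
by rewrite -ltnS (leq_trans (ltn_ord k) sZ).
Qed.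

Unset Implicit Arguments.

Theorem mainTheorem15 (d : Order.disp_t) (P : finPOrderType d) (h : P -> nat)
  (H : nat) :
  is_height h ->
  (forall x : P, (h x <= H)%N) ->
  forall n : int,
    (qZeta (fun x : P^d => (H - h x)%N)).[qint n]
    = qv ^ ((n - 1) * H%:Z) * sigma ((qZeta h).[qint n]).
Proof.
move=> Hh hH n.
have [Z0 [spec0 size0]] := qZeta_exists Hh hH.
have eZ := @qZeta_eq _ _ _ _ spec0.
have sZ : (size (qZeta h) <= H.+1)%N by rewrite eZ.
have WS : qZeta_spec (fun x : P^d => (H - h x)%N) (Wp (qZeta h) H).
  move=> m m2.
  rewrite W_eval // eZ spec0 // dual_chain //.
  exact: leq_trans m2.
by rewrite (@qZeta_eq _ _ _ _ WS) W_eval.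
Qed.
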